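(* Let $n\geq 2$ and $r\geq 4$ be integers and let $I_0\subseteq S=\Bbbk[\alpha_0,\ldots,\alpha_n]$ be the monomial ideal generated by all monomials of degree $r-2$ lying in the ideal $(\alpha_0,\ldots,\alpha_{n-2})$ except $\alpha_{n-2}\alpha_n^{r-3}$, together with $\alpha_{n-2}\alpha_n^{r-2}$ and $\alpha_{n-1}^r$. Then $\dim_\Bbbk\operatorname{Hom}_S(I_0,S/I_0)_0\leq\binom{n+r-2}{n}+2n-1$.
   Context: $\Bbbk$ algebraically closed, $S$ standard graded; $\operatorname{Hom}_S(M,N)_0$ denotes degree-preserving homomorphisms of graded $S$-modules. *)

(* Defs.v *)
From HB Require Import structures.
From mathcomp Require Import all_boot all_order all_algebra.
From mathcomp Require Import mpoly.
Set Implicit Arguments. Unset Strict Implicit. Unset Printing Implicit Defensive.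
Import GRing.Theory.
Local Open Scope ring_scope.

Section Defs.
Variables (K : fieldType) (m : nat).
Local Notation S := {mpoly K[m]}.

Definition in_mideal (G : 'X_{1..m} -> Prop) (p : S) : Prop :=
  exists s : seq (S * 'X_{1..m}),
    (forall x, x \in s -> G x.2) /\ p = \sum_(x <- s) x.1 * 'X_[x.2].

(* A function f : S -> S represents a degree-preserving S-module homomorphism
   I -> S/I (I given by the membership predicate inI), phi(x) = class of f x,
   for x in I. *)
Definition graded_hom_to_quot (inI : S -> Prop) (f : S -> S) : Prop :=
  [/\ (forall x y, inI x -> inI y -> inI (f (x + y) - (f x + f y))),
      (forall (s x : S), inI x -> inI (f (s * x) - s * f x)) &
      (forall (d : nat) (x : S), inI x -> x \is d.-homog ->
          exists h : S, h \is d.-homog /\ inI (f x - h))].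

(* dim_K Hom_S(I, S/I)_0 <= N : any N+1 such homomorphisms are K-linearly
   dependent (as maps I -> S/I). *)
Definition hom0_dim_le (inI : S -> Prop) (N : nat) : Prop :=
  forall fs : 'I_N.+1 -> S -> S,
    (forall i, graded_hom_to_quot inI (fs i)) ->
    exists c : 'I_N.+1 -> K,
      (exists i, c i != 0) /\
      (forall x, inI x -> inI (\sum_(i < N.+1) c i *: fs i x)).
End Defs.

Definition I0_gen (n r : nat) (mu : 'X_{1..n.+1}) : Prop :=
  ((mdeg mu = r - 2)%N /\
   (exists j : 'I_n.+1, (j <= n - 2)%N /\ (0 < mu j)%N) /\
   mu <> (U_(inord (n - 2)) + U_(inord n) *+ (r - 3))%MM)
  \/ mu = (U_(inord (n - 2)) + U_(inord n) *+ (r - 2))%MM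
  \/ mu = (U_(inord (n - 1)) *+ r)%MM.

(* Main.v *)
Require Import Defs.
From HB Require Import structures.
From mathcomp Require Import all_boot all_order all_algebra.
From mathcomp Require Import mpoly.
From Stdlib Require Import Classical Lia.
From mathcomp Require Import zify.
Set Implicit Arguments. Unset Strict Implicit. Unset Printing Implicit Defensive.
Import GRing.Theory.

Module MP1.
Local Open Scope ring_scope.

Section Ideal.
Variables (K : fieldType) (m : nat) (G : 'X_{1..m} -> Prop).
Local Notation S := {mpoly K[m]}.
Local Notation inI := (@in_mideal K m G).

Definition inIm (u : 'X_{1..m}) := exists g, G g /\ (g <= u)%MM.

Lemma inI0 : inI 0.
Proof. by exists [::]; split => //; rewrite big_nil. Qed.

Lemma inID a b : inI a -> inI b -> inI (a + b).
Proof.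
move=> [s1 [h1 ->]] [s2 [h2 ->]]; exists (s1 ++ s2); split; last by rewrite big_cat.
by move=> x; rewrite mem_cat => /orP[/h1|/h2].
Qed.

Lemma inIM s a : inI a -> inI (s * a).
Proof.
move=> [s1 [h1 ->]]; exists [seq (s * x.1, x.2) | x <- s1]; split.
  by move=> x /mapP [y /h1 hy ->].
by rewrite big_map mulr_sumr; apply: eq_bigr => x _; rewrite mulrA.
Qed.

Lemma inIN a : inI a -> inI (- a).
Proof. by move=> h; rewrite -mulN1r; apply: inIM. Qed.

Lemma inIB a b : inI a -> inI b -> inI (a - b).
Proof. by move=> ha hb; apply: inID => //; apply: inIN. Qed.

Lemma inIZ c a : inI a -> inI (c *: a).
Proof. by move=> h; rewrite -mul_mpolyC; apply: inIM. Qed.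

Lemma inIX g : G g -> inI 'X_[g].
Proof.
move=> hg; exists [:: (1, g)]; split; first by move=> x; rewrite inE => /eqP ->.
by rewrite big_seq1 mul1r.
Qed.

Lemma inI_sum (I : Type) (r : seq I) (F : I -> S) :
  (forall i, inI (F i)) -> inI (\sum_(i <- r) F i).
Proof.
move=> h; elim: r => [|x r ih]; first by rewrite big_nil; apply: inI0.
by rewrite big_cons; apply: inID.
Qed.

Lemma mcoefXr (q : S) g u : (g <= u)%MM -> (q * 'X_[g])@_u = q@_(u - g).
Proof. by move=> h; rewrite -{1}(submK h) addmC mcoeffMX. Qed.

Lemma mcoefXr0 (q : S) g u : ~~ (g <= u)%MM -> (q * 'X_[g])@_u = 0.
Proof.
move=> h; apply: memN_msupp_eq0; rewrite (perm_mem (msuppMX q g)).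
apply/negP => /mapP [m' _ e]; move: h; rewrite e; by rewrite lem_addr.
Qed.

Lemma coef_inI (p : S) u : inI p -> ~ inIm u -> p@_u = 0.
Proof.
move=> [s [hs ->]] hu; rewrite raddf_sum big_seq big1 // => x xs.
apply: mcoefXr0; apply/negP => le; apply: hu; exists x.2; split => //.
exact: hs.
Qed.

Lemma inI_coef (p : S) : (forall u, ~ inIm u -> p@_u = 0) -> inI p.
Proof.
move=> h; rewrite (mpolyE p); apply: inI_sum => u.
case: (classic (inIm u)) => [[g [hg le]]|nu]; last by rewrite h // scale0r; apply: inI0.
rewrite -(submK le) mpolyXD scalerAl; apply: inIM; exact: inIX.
Qed.

End Ideal.

End MP1.
Import MP1.

Module MP2.
Local Open Scope ring_scope.

Section Hom.
Variables (K : fieldType) (m : nat) (G : 'X_{1..m} -> Prop).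
Local Notation S := {mpoly K[m]}.
Local Notation inI := (@in_mideal K m G).

Definition Cf (f : S -> S) g u := (f 'X_[g])@_u.

Lemma maxm_eq (g g' : 'X_{1..m}) : ((g' - g) + g = (g - g') + g')%MM.
Proof. by apply/mnmP => i; rewrite !mnmE; lia. Qed.

Lemma hom_rel f g g' v : graded_hom_to_quot inI f -> G g -> G g' -> ~ inIm G v ->
  (if (g' - g <= v)%MM then Cf f g (v - (g' - g)) else 0) =
  (if (g - g' <= v)%MM then Cf f g' (v - (g - g')) else 0).
Proof.
move=> [h1 h2 h3] hg hg' hv.
have e1 := h2 'X_[g' - g] _ (inIX K hg); have e2 := h2 'X_[g - g'] _ (inIX K hg').
rewrite -!mpolyXD maxm_eq in e1.
rewrite -!mpolyXD in e2.
have := coef_inI (inIB e2 e1) hv.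
have E : forall x a b : S, (x - a) - (x - b) = b - a.
  by move=> x a b; rewrite opprB addrC addrA subrK.
rewrite E mcoeffB ![_ * f _]mulrC => /eqP; rewrite subr_eq0 => /eqP eq.
rewrite /Cf.
case: ifP => a; [rewrite (mcoefXr _ a) in eq | rewrite (mcoefXr0 _ (negbT a)) in eq].
all: case: ifP => b; [rewrite (mcoefXr _ b) in eq | rewrite (mcoefXr0 _ (negbT b)) in eq].
all: by [rewrite eq | ].
Qed.

Lemma hom_deg f g u : graded_hom_to_quot inI f -> G g -> ~ inIm G u ->
  mdeg u != mdeg g -> Cf f g u = 0.
Proof.
move=> [h1 h2 h3] hg hu hd.
have hX : ('X_[g] : S) \is (mdeg g).-homog by rewrite dhomogX.
have [h [hh hi]] := h3 (mdeg g) 'X_[g] (inIX K hg) hX.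
rewrite /Cf; have := coef_inI hi hu; rewrite mcoeffB => /eqP; rewrite subr_eq0 => /eqP ->.
exact: dhomog_nemf_coeff hh hd.
Qed.

Lemma hom_final f :
  (forall x y, inI x -> inI y -> inI (f (x + y) - (f x + f y))) ->
  (forall s x, inI x -> inI (f (s * x) - s * f x)) ->
  (forall g u, G g -> ~ inIm G u -> Cf f g u = 0) ->
  forall x, inI x -> inI (f x).
Proof.
move=> h1 h2 hc x [s [hs ->]]; elim: s hs => [|a s ih] hs.
  rewrite big_nil; have := h2 0 0 (inI0 _ _); by rewrite !mul0r subr0.
have ha : G a.2 by apply: hs; rewrite inE eqxx.
have hs' : forall x, x \in s -> G x.2 by move=> y ys; apply: hs; rewrite inE ys orbT.
have ht : inI (a.1 * 'X_[a.2]) by apply: inIM; apply: inIX.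
have hr : inI (\sum_(x <- s) x.1 * 'X_[x.2]) by exists s.
rewrite big_cons.
have e := h1 _ _ ht hr.
have e2 := h2 a.1 _ (inIX K ha).
have e3 : inI (f 'X_[a.2]) by apply: inI_coef => u hu; apply: hc.
have := inID (inID e (inID e2 (inIM a.1 e3))) (ih hs').
by rewrite subrK -addrA subrK.

Qed.

Section Lin.
Variables (k : nat) (fs : 'I_k -> S -> S) (c : 'I_k -> K).
Definition Flin x := \sum_(i < k) c i *: fs i x.

Lemma Flin_add : (forall i, graded_hom_to_quot inI (fs i)) ->
  forall x y, inI x -> inI y -> inI (Flin (x + y) - (Flin x + Flin y)).
Proof.
move=> h x y hx hy; rewrite /Flin -big_split -sumrB /=.
apply: inI_sum => i; rewrite -!scalerDr -scalerBr; apply: inIZ.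
by case: (h i) => h1 _ _; apply: h1.
Qed.

Lemma Flin_mul : (forall i, graded_hom_to_quot inI (fs i)) ->
  forall s x, inI x -> inI (Flin (s * x) - s * Flin x).
Proof.
move=> h s x hx; rewrite /Flin mulr_sumr -sumrB /=.
apply: inI_sum => i; rewrite -scalerAr -scalerBr; apply: inIZ.
by case: (h i) => _ h2 _; apply: h2.
Qed.

Lemma Flin_coef g u : Cf Flin g u = \sum_(i < k) c i * Cf (fs i) g u.
Proof. rewrite /Cf /Flin raddf_sum; by apply: eq_bigr => i _; apply: mcoeffZ. Qed.
End Lin.
End Hom.

End MP2.
Import MP2.

Module MP3.
Local Open Scope ring_scope.

Lemma dep_rows (K : fieldType) k l (M : 'M[K]_(k.+1, l)) : (l <= k)%N ->
  exists c : 'I_k.+1 -> K, (exists i, c i != 0) /\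
    forall j, \sum_i c i * M i j = 0.
Proof.
move=> hl.
have nf : ~~ row_free M.
  rewrite /row_free; apply/negP => /eqP e.
  by have := rank_leq_col M; rewrite e ltnNge (leq_trans hl).
rewrite -kermx_eq0 in nf.
have [i [j hij]] := matrix0Pn _ nf.
exists (fun a => kermx M i a); split; first by exists j.
move=> b; have := congr1 (fun A : 'M_(k.+1, l) => A i b) (mulmx_ker M).
by rewrite mxE => ->; rewrite mxE.
Qed.

End MP3.
Import MP3.

Module MP4.

Section Comb.
Variables (n r : nat).
Hypotheses (hn : (2 <= n)%N) (hr : (4 <= r)%N).
Local Notation M := 'X_{1..n.+1}.
Local Notation G := (@I0_gen n r).
Local Notation p := (inord (n - 2) : 'I_n.+1).
Local Notation y := (inord (n - 1) : 'I_n.+1).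
Local Notation z := (inord n : 'I_n.+1).
Local Notation d := (r - 2).
Local Notation m0 := (U_(inord (n - 2)) + U_(inord n) *+ (r - 3))%MM.
Local Notation g1 := (U_(inord (n - 2)) + U_(inord n) *+ (r - 2))%MM.
Local Notation g2 := (U_(inord (n - 1)) *+ r)%MM.
Definition YZ a b : M := (U_(y) *+ a + U_(z) *+ b)%MM.
Definition XYZ (j : 'I_n.+1) s t : M := (U_(j) + U_(y) *+ s + U_(z) *+ t)%MM.

Lemma vp : nat_of_ord p = (n - 2)%N. Proof. by rewrite inordK //; lia. Qed.
Lemma vy : nat_of_ord y = (n - 1)%N. Proof. by rewrite inordK //; lia. Qed.
Lemma vz : nat_of_ord z = n. Proof. by rewrite inordK //; lia. Qed.
Lemma ordE (j i : 'I_n.+1) : (j == i) = (nat_of_ord j == nat_of_ord i). Proof. by []. Qed.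

Ltac msimpl := rewrite /YZ /XYZ ?(mnmDE, mnmBE, mulmnE, mnm1E, ordE, vp, vy, vz).
Ltac msolve := let i := fresh "i" in
  (apply/mnmP => i || apply/mnm_lepP => i); msimpl; have := ltn_ord i; lia.

Lemma notle (m1 m2 : M) i : (m2 i < m1 i)%N -> ~~ (m1 <= m2)%MM.
Proof. by move=> h; apply/negP => /mnm_lepP /(_ i); rewrite leqNgt h. Qed.

Lemma mdegYZ a b : mdeg (YZ a b) = (a + b)%N.
Proof. by rewrite /YZ mdegD !mdegMn !mdeg1 !mul1n. Qed.
Lemma mdegXYZ j s t : mdeg (XYZ j s t) = (1 + s + t)%N.
Proof. by rewrite /XYZ !mdegD !mdegMn !mdeg1 !mul1n. Qed.

Definition nolow (u : M) := forall i : 'I_n.+1, (nat_of_ord i <= n - 2)%N -> u i = 0%N.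

Lemma nolowE u : nolow u -> u = YZ (u y) (u z).
Proof.
move=> h; apply/mnmP => i; msimpl.
have := ltn_ord i; case: (leqP (nat_of_ord i) (n - 2)) => hi hi'.
  rewrite h //; lia.
have [e|e] : nat_of_ord i = (n - 1)%N \/ nat_of_ord i = n by lia.
  have -> : i = y by apply: ord_inj; rewrite vy.
  rewrite vy; lia.
have -> : i = z by apply: ord_inj; rewrite vz.
rewrite vz; lia.
Qed.

Lemma notI_YZ a b : (a < r)%N -> ~ inIm G (YZ a b).
Proof.
move=> ha [g [hg /mnm_lepP le]].
case: hg le => [[_ [[j [hj gj]] _]]|[->|->]] le.
- by have := le j; msimpl; lia.
- by have := le p; msimpl; lia.
- by have := le y; msimpl; lia.
Qed.

Lemma lt_exists (v u : M) : (v <= u)%MM -> (mdeg v < mdeg u)%N ->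
  exists i, (v i < u i)%N.
Proof.
move=> le lt; case: (boolP [exists i, v i < u i]) => [/existsP[i hi]|/existsPn h].
  by exists i.
exfalso; move: lt; rewrite !mdegE ltnNge; apply/negP/negPn.
by apply: leq_sum => i _; rewrite leqNgt h.
Qed.

Lemma divdeg k (u w : M) : (w <= u)%MM -> (mdeg w <= k)%N -> (k <= mdeg u)%N ->
  exists v : M, [/\ (w <= v)%MM, (v <= u)%MM & mdeg v = k].
Proof.
move=> wu h1; have [e ->] : exists e, k = (mdeg w + e)%N by exists (k - mdeg w)%N; lia.
elim: e => [|e ih] he; first by exists w; rewrite addn0 lepm_refl.
have [v [wv vu dv]] := ih ltac:(lia).
have [i hi] := lt_exists vu ltac:(rewrite dv; lia).
exists (v + U_(i))%MM; split.
- by apply: lepm_trans wv _; apply: lem_addr.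
- apply/mnm_lepP => j; rewrite mnmDE mnm1E; move/mnm_lepP: vu => /(_ j).
  by case: (eqVneq i j) => [<-|_] /=; lia.
- by rewrite mdegD mdeg1 dv; lia.
Qed.

Lemma GA (g : M) (j : 'I_n.+1) : mdeg g = d -> (nat_of_ord j <= n - 2)%N -> (0 < g j)%N ->
  g <> m0 -> G g.
Proof. by move=> h1 h2 h3 h4; left; split => //; split => //; exists j. Qed.

Lemma classify (u : M) : (d <= mdeg u)%N -> ~ inIm G u -> nolow u \/ u = m0.
Proof.
move=> hd hu; case: (classic (nolow u)) => [h|h]; first by left.
right; have [j [hj uj]] : exists j : 'I_n.+1, (nat_of_ord j <= n - 2)%N /\ (0 < u j)%N.
  apply: NNPP => ne; apply: h => i hi; case: (posnP (u i)) => // ui.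
  by exfalso; apply: ne; exists i.
have ju : (U_(j) <= u)%MM by rewrite lep1mP; lia.
have [v [jv vu dv]] := @divdeg d u U_(j) ju ltac:(rewrite mdeg1; lia) hd.
have vj : (0 < v j)%N by move: jv; rewrite lep1mP; lia.
case: (classic (v = m0)) => [ev|nev]; last first.
  by exfalso; apply: hu; exists v; split => //; apply: GA vj nev.
apply: NNPP => neu; rewrite ev in vu.
have [i hi] : exists i, (m0 i < u i)%N.
  case: (boolP [exists i, m0 i < u i]) => [/existsP[i hi]|/existsPn hh]; first by exists i.
  exfalso; apply: neu; apply/mnmP => i; move/mnm_lepP: vu => /(_ i).
  by have := hh i; rewrite -leqNgt; lia.
case: (eqVneq i z) => [ei|nei].
  apply: hu; exists g1; split; first by right; left.
  apply/mnm_lepP => k; move/mnm_lepP: vu => /(_ k).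
  rewrite ei in hi; move: hi; clear -hn hr; msimpl.
  case: (eqVneq k z) => [->|nk]; msimpl; first lia.
  move: nk; rewrite ordE vz; lia.
apply: hu; exists (U_(p) + U_(z) *+ (r - 4) + U_(i))%MM; split.
  apply: (@GA _ p).
  - rewrite !mdegD mdegMn !mdeg1; lia.
  - rewrite vp; lia.
  - msimpl; lia.
  - move/mnmP => /(_ z); msimpl; move: nei; rewrite ordE vz; lia.
apply/mnm_lepP => k; move/mnm_lepP: vu => /(_ k).
case: (eqVneq k i) => [->|nk].
  move: hi nei; rewrite ordE vz; msimpl; lia.
move: nk; rewrite ordE; msimpl; lia.
Qed.

Lemma GXYZ (j : 'I_n.+1) s t : (nat_of_ord j <= n - 2)%N -> (s + t = d - 1)%N ->
  (nat_of_ord j != n - 2) || (0 < s)%N -> G (XYZ j s t).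
Proof.
move=> hj hst hne; apply: (@GA _ j).
- rewrite mdegXYZ; lia.
- done.
- msimpl; lia.
- case/orP: hne => hne.
    move/mnmP => /(_ j); msimpl; move: hne; rewrite /=; lia.
  move/mnmP => /(_ y); msimpl; lia.
Qed.

Lemma Gg1 : G g1. Proof. by right; left. Qed.
Lemma Gg2 : G g2. Proof. by right; right. Qed.

Definition lowl : seq 'I_n.+1 := [seq inord k | k <- iota 0 (n - 2)].
Definition sb : seq M := [seq s2m t | t : d.-tuple 'I_n.+1 <- enum (basis n.+1 d)].
Definition fcA (w : M) : M * M :=
  if w == m0 then (g2, YZ (r - 1) 1)
  else if [exists j : 'I_n.+1, (nat_of_ord j <= n - 2) && (0 < w j)%N] then (w, m0)
  else (g2, (w + U_(z) *+ 2)%MM).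
Definition FL : seq (M * M) :=
  [seq fcA w | w <- sb] ++ [seq (XYZ j 0 (d - 1), YZ 0 d) | j <- lowl] ++
  [seq (XYZ j 0 (d - 1), YZ 1 (d - 1)) | j <- lowl] ++
  [:: (g1, YZ 0 d.+1); (g1, YZ 1 d); (g1, YZ d.+1 0)].

Lemma in_lowl (j : 'I_n.+1) : (nat_of_ord j < n - 2)%N -> j \in lowl.
Proof.
move=> hj; apply/mapP; exists (nat_of_ord j); first by rewrite mem_iota; lia.
by apply: ord_inj; rewrite inordK //; lia.
Qed.

Section Core.
Variables (K : fieldType) (C : M -> M -> K).
Hypothesis HR : forall g g' v, G g -> G g' -> ~ inIm G v ->
  (if (g' - g <= v)%MM then C g (v - (g' - g)) else 0%R) =
  (if (g - g' <= v)%MM then C g' (v - (g - g')) else 0%R).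
Hypothesis HF : forall x, x \in FL -> C x.1 x.2 = 0%R.
Hypothesis HD : forall g u, G g -> ~ inIm G u -> mdeg u != mdeg g -> C g u = 0%R.

Lemma LR g g' u w w' : G g -> G g' -> (g' - g)%MM = w -> (g - g')%MM = w' ->
  ~ inIm G (u + w) ->
  C g u = if (w' <= u + w)%MM then C g' (u + w - w') else 0%R.
Proof.
move=> hg hg' e1 e2 hv; have := HR hg hg' hv; rewrite e1 e2 lem_addl addmK.
by [].
Qed.

Lemma K1 (j : 'I_n.+1) s t a : (nat_of_ord j <= n - 2)%N -> (s + t = d - 1)%N ->
  G (XYZ j s t) -> (a < s)%N -> (a <= d)%N -> C (XYZ j s t) (YZ a (d - a)) = 0%R.
Proof.
move=> hj hst hg has had.
rewrite (@LR _ g2 _ (U_(y) *+ (r - s)) (U_(j) + U_(z) *+ t) hg Gg2).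
- by rewrite (negbTE (@notle _ _ j _)) //; msimpl; lia.
- msolve.
- msolve.
have -> : (YZ a (d - a) + U_(y) *+ (r - s))%MM = YZ (a + (r - s)) (d - a) by msolve.
apply: notI_YZ; lia.
Qed.

Lemma K2 (j : 'I_n.+1) t : (nat_of_ord j <= n - 2)%N -> forall s a, (s + t = d - 1)%N ->
  G (XYZ j s t) -> (s + 2 <= a)%N -> (a <= d)%N -> C (XYZ j s t) (YZ a (d - a)) = 0%R.
Proof.
move=> hj; elim: t => [|t ih] s a hst hg hsa had; first by lia.
have hg' : G (XYZ j s.+1 t) by apply: GXYZ => //; lia.
rewrite (@LR _ (XYZ j s.+1 t) _ U_(y) U_(z) hg hg'); first last.
- have -> : (YZ a (d - a) + U_(y))%MM = YZ a.+1 (d - a) by msolve.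
  apply: notI_YZ; lia.
- msolve.
- msolve.
case: (eqVneq a d) => [ead|nad].
  by rewrite (negbTE (@notle _ _ z _)) //; msimpl; lia.
have -> : (U_(z) <= YZ a (d - a) + U_(y))%MM by msolve.
have -> : (YZ a (d - a) + U_(y) - U_(z))%MM = YZ a.+1 (d - a.+1) by msolve.
apply: ih => //; lia.
Qed.

Lemma gqE : (XYZ p 1 (d - 2) - g1 = U_(y))%MM /\ (g1 - XYZ p 1 (d - 2) = U_(z) *+ 2)%MM.
Proof. split; msolve. Qed.

Lemma K3 (j : 'I_n.+1) s : (nat_of_ord j <= n - 2)%N -> forall t a, (s + t = d - 1)%N ->
  (nat_of_ord j != n - 2) || (0 < s)%N -> (a = s \/ a = s.+1) ->
  C (XYZ j s t) (YZ a (d - a)) = 0%R.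
Proof.
move=> hj; elim: s => [|s ih] t a hst hne ha.
  have hj' : (nat_of_ord j < n - 2)%N by move: hne; rewrite /=; lia.
  apply: (HF (x := (XYZ j 0 t, YZ a (d - a)))).
  have et : t = (d - 1)%N by lia.
  rewrite /FL !mem_cat; case: ha => ->; apply/orP; right; apply/orP;
    [left | right; apply/orP; left]; apply/mapP; exists j;
    rewrite ?in_lowl ?et ?subn0 //.
have hg : G (XYZ j s.+1 t) by apply: GXYZ.
case: (boolP ((nat_of_ord j == n - 2) && (s == 0%N))) => [/andP[/eqP ej /eqP es]|hne'].
  have ejp : j = p by apply: ord_inj; rewrite vp.
  subst j s; have et : t = (d - 2)%N by lia.
  subst t; case: gqE => e1 e2.
  rewrite (@LR _ g1 _ (U_(z) *+ 2) U_(y) hg Gg1 e2 e1); last first.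
    have -> : (YZ a (d - a) + U_(z) *+ 2)%MM = YZ a (d - a + 2) by msolve.
    apply: notI_YZ; lia.
  have -> : (U_(y) <= YZ a (d - a) + U_(z) *+ 2)%MM by msolve.
  apply: (HF (x := (g1, _))); rewrite !mem_cat; apply/orP; right; apply/orP; right.
  apply/orP; right; rewrite !inE; apply/orP.
  case: ha => ->; [left|right; apply/orP; left]; apply/eqP; congr pair; msolve.
have hg' : G (XYZ j s t.+1) by apply: GXYZ; lia.
rewrite (@LR _ (XYZ j s t.+1) _ U_(z) U_(y) hg hg'); first last.
- have -> : (YZ a (d - a) + U_(z))%MM = YZ a (d - a).+1 by msolve.
  apply: notI_YZ; lia.
- msolve.
- msolve.
have -> : (U_(y) <= YZ a (d - a) + U_(z))%MM by msolve.
have -> : (YZ a (d - a) + U_(z) - U_(y))%MM = YZ a.-1 (d - a.-1) by msolve.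
apply: ih; try lia.
Qed.

Lemma A1 (j : 'I_n.+1) s t a : (nat_of_ord j <= n - 2)%N -> (s + t = d - 1)%N ->
  (nat_of_ord j != n - 2) || (0 < s)%N -> (a <= d)%N ->
  C (XYZ j s t) (YZ a (d - a)) = 0%R.
Proof.
move=> hj hst hne had.
have hg : G (XYZ j s t) by apply: GXYZ.
case: (ltnP a s) => h1; first exact: K1 hj hst hg h1 had.
case: (leqP (s + 2) a) => h2; first exact: (@K2 j t hj s a hst hg h2 had).
apply: K3 => //; lia.
Qed.

Lemma B1 a : (a <= d.+1)%N -> C g1 (YZ a (d.+1 - a)) = 0%R.
Proof.
move=> ha.
have inF : forall b, (b == 0%N) || (b == 1%N) || (b == d.+1) -> (g1, YZ b (d.+1 - b)) \in FL.
  move=> b hb; rewrite /FL !mem_cat; apply/orP; right; apply/orP; right; apply/orP; right.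
  rewrite !inE; case/orP: hb => [/orP[]|] /eqP ->.
  - by rewrite subn0 eqxx.
  - by rewrite subSS subn0 eqxx !orbT.
  - by rewrite subnn eqxx !orbT.
case: (boolP ((a == 0%N) || (a == 1%N) || (a == d.+1))) => hb.
  exact: (HF (inF a hb)).
case: gqE => e1 e2.
have hgq : G (XYZ p 1 (d - 2)) by apply: GXYZ; rewrite ?vp; lia.
rewrite (@LR _ (XYZ p 1 (d - 2)) _ U_(y) (U_(z) *+ 2) Gg1 hgq e1 e2); last first.
  have -> : (YZ a (d.+1 - a) + U_(y))%MM = YZ a.+1 (d.+1 - a) by msolve.
  apply: notI_YZ; lia.
case: (eqVneq a d) => [ead|nad].
  by rewrite (negbTE (@notle _ _ z _)) //; msimpl; lia.
have -> : (U_(z) *+ 2 <= YZ a (d.+1 - a) + U_(y))%MM by msolve.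
have -> : (YZ a (d.+1 - a) + U_(y) - U_(z) *+ 2)%MM = YZ a.+1 (d - a.+1) by msolve.
apply: (@K2 p (d - 2) _ 1); rewrite ?vp //; lia.
Qed.

Lemma in_sb (w : M) : mdeg w = d -> w \in sb.
Proof. by move=> h; rewrite /sb -basis_cover h. Qed.

Lemma C1 a : (a < r)%N -> C g2 (YZ a (r - a)) = 0%R.
Proof.
move=> ha; case: (leqP a d) => had.
  apply: (HF (x := (g2, YZ a (r - a)))); rewrite /FL mem_cat; apply/orP; left.
  apply/mapP; exists (YZ a (d - a)); first by apply: in_sb; rewrite mdegYZ; lia.
  rewrite /fcA.
  have -> : (YZ a (d - a) == m0) = false.
    by apply/negP => /eqP /mnmP /(_ p); msimpl; lia.
  case: existsP => [[j /andP[hj]]|_]; first by msimpl; lia.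
  congr pair; msolve.
have ea : a = (r - 1)%N by lia.
apply: (HF (x := (g2, YZ a (r - a)))); rewrite /FL mem_cat; apply/orP; left.
apply/mapP; exists m0; first by apply: in_sb; rewrite mdegD mdegMn !mdeg1; lia.
by rewrite /fcA eqxx ea; have -> : (r - (r - 1) = 1)%N by lia.
Qed.

Lemma idx_cases (i : 'I_n.+1) : (nat_of_ord i <= n - 2)%N \/ i = y \/ i = z.
Proof.
have := ltn_ord i; case: (leqP (nat_of_ord i) (n - 2)) => h1 h2; first by left.
right; have [e|e] : nat_of_ord i = (n - 1)%N \/ nat_of_ord i = n by lia.
  by left; apply: ord_inj; rewrite vy.
by right; apply: ord_inj; rewrite vz.
Qed.

Lemma A2 (g : M) (j : 'I_n.+1) a : mdeg g = d -> (nat_of_ord j <= n - 2)%N ->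
  (0 < g j)%N -> g <> m0 -> (a <= d)%N -> C g (YZ a (d - a)) = 0%R.
Proof.
move=> dg hj gj gm0 ha.
have hgA : G g by apply: GA gj gm0.
have jg : (U_(j) <= g)%MM by rewrite lep1mP; lia.
have dsub : (mdeg (g - U_(j)) + 1 = d)%N by rewrite -dg -{2}(submK jg) mdegD mdeg1.
case: (classic (nolow (g - U_(j)))) => [hnl|hnl].
  have eg : g = XYZ j (g y) (g z).
    apply/mnmP => i; case: (idx_cases i) => [hi|[->|->]]; last 2 first.
    - msimpl; lia.
    - msimpl; lia.
    have := hnl i hi; case: (eqVneq i j) => [->|ne]; msimpl; first lia.
    move: ne; rewrite ordE; lia.
  have hst : (g y + g z = d - 1)%N by move: dg; rewrite {1}eg mdegXYZ; lia.
  rewrite eg; apply: A1 => //.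
  apply/negP => /negP; rewrite negb_or !negbK => /andP[/eqP ej hs].
  apply: gm0; rewrite eg; apply/mnmP => i; have ejp : j = p by apply: ord_inj; rewrite vp.
  subst j; msimpl; lia.
have [k [hk gk]] : exists k : 'I_n.+1, (nat_of_ord k <= n - 2)%N /\ (0 < (g - U_(j))%MM k)%N.
  apply: NNPP => ne; apply: hnl => i hi; case: (posnP ((g - U_(j))%MM i)) => // ui.
  by exfalso; apply: ne; exists i.
have hg' : G (g - U_(j) + U_(y))%MM.
  apply: (@GA _ k).
  - by rewrite mdegD mdeg1.
  - done.
  - by rewrite mnmDE; lia.
  - move/mnmP => /(_ y); msimpl; lia.
rewrite (@LR _ (g - U_(j) + U_(y))%MM _ U_(y) U_(j) hgA hg'); first last.
- have -> : (YZ a (d - a) + U_(y))%MM = YZ a.+1 (d - a) by msolve.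
  apply: notI_YZ; lia.
- apply/mnmP => i; msimpl; case: (eqVneq i j) => [->|ne]; msimpl; first lia.
  by move: ne; rewrite ordE; lia.
- apply/mnmP => i; msimpl; case: (eqVneq i j) => [->|ne]; msimpl; first lia.
  by move: ne; rewrite ordE; lia.
by rewrite (negbTE (@notle _ _ j _)) //; msimpl; lia.
Qed.

Lemma core g u : G g -> ~ inIm G u -> C g u = 0%R.
Proof.
move=> hg hu; case: (eqVneq (mdeg u) (mdeg g)) => [e|ne]; last exact: HD.
have hg0 := hg.
case: hg => [[dg [[j [hj gj]] gm0]]|[eg|eg]].
- have [hnl|um] := @classify u ltac:(rewrite e dg; lia) hu.
    have [a [b [eu hab]]] : exists a b, u = YZ a b /\ (a + b = mdeg u)%N.
      by exists (u y), (u z); split; [exact: nolowE | rewrite -mdegYZ -nolowE].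
    rewrite eu; rewrite e dg in hab; have -> : b = (d - a)%N by lia.
    apply: A2 gj gm0 _ => //; lia.
  rewrite um; apply: (HF (x := (g, m0))); rewrite /FL mem_cat; apply/orP; left.
  apply/mapP; exists g; first exact: in_sb.
  rewrite /fcA; case: eqP => // _; by case: existsP => // [[]]; exists j; rewrite hj gj.
- rewrite {}eg in e hg0 *; have dg1 : mdeg (g1 : M) = d.+1 by rewrite mdegD mdegMn !mdeg1; lia.
  have [hnl|um] := @classify u ltac:(rewrite e dg1; lia) hu; last first.
    by move: e; rewrite um dg1 mdegD mdegMn !mdeg1; lia.
  have [a [b [eu hab]]] : exists a b, u = YZ a b /\ (a + b = mdeg u)%N.
    by exists (u y), (u z); split; [exact: nolowE | rewrite -mdegYZ -nolowE].
  rewrite eu; rewrite e dg1 in hab; have -> : b = (d.+1 - a)%N by lia.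
  apply: B1; lia.
- rewrite {}eg in e hg0 *; have dg2 : mdeg (g2 : M) = r by rewrite mdegMn !mdeg1; lia.
  have [hnl|um] := @classify u ltac:(rewrite e dg2; lia) hu; last first.
    by move: e; rewrite um dg2 mdegD mdegMn !mdeg1; lia.
  have [a [b [eu hab]]] : exists a b, u = YZ a b /\ (a + b = mdeg u)%N.
    by exists (u y), (u z); split; [exact: nolowE | rewrite -mdegYZ -nolowE].
  rewrite e dg2 in hab.
  have hy : (a < r)%N.
    rewrite ltnNge; apply/negP => le; apply: hu; exists g2; split; first exact: Gg2.
    rewrite eu; apply/mnm_lepP => i; msimpl; lia.
  rewrite eu; have -> : b = (r - a)%N by lia.
  exact: C1.
Qed.

End Core.

End Comb.

End MP4.
Import MP4.

Module MP5.
Local Open Scope ring_scope.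

Lemma size_FL n r : (2 <= n)%N -> (4 <= r)%N ->
  (size (FL n r) <= 'C(n + r - 2, n) + 2 * n - 1)%N.
Proof.
move=> hn hr.
have hsb : size (sb n r) = 'C(r - 2 + n, r - 2) := size_basis n (r - 2).
rewrite /FL !size_cat size_map hsb !size_map size_iota /=.
have -> : (r - 2 + n = n + r - 2)%N by lia.
have -> : 'C(n + r - 2, r - 2) = 'C(n + r - 2, n).
  by rewrite -bin_sub; [congr binomial; lia | lia].
lia.
Qed.


End MP5.
Import MP5.

Local Open Scope ring_scope.

Theorem lemma2p10 (K : closedFieldType) (n r : nat) :
  (2 <= n)%N -> (4 <= r)%N ->
  hom0_dim_le (@in_mideal K n.+1 (I0_gen r))
    ('C(n + r - 2, n) + 2 * n - 1)%N.
Proof.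
move=> hn hr fs hfs.
set N := ('C(n + r - 2, n) + 2 * n - 1)%N.
pose L := FL n r.
pose x0 : 'X_{1..n.+1} * 'X_{1..n.+1} := (0%MM, 0%MM).
pose A := \matrix_(i < N.+1, k < size L) Cf (fs i) (nth x0 L k).1 (nth x0 L k).2.
have [c [hc hA]] := dep_rows A (size_FL hn hr).
exists c; split => //.
pose F := Flin fs c.
apply: (hom_final (f := F)).
- exact: Flin_add.
- exact: Flin_mul.
move=> g u hg hu.
apply: (core hn hr (C := Cf F)) => //.
- move=> g0 g' v h0 h' hv.
  have H := fun i => hom_rel (v := v) (hfs i) h0 h' hv.
  case: ifP => a; case: ifP => b; rewrite ?Flin_coef.
  + by apply: eq_bigr => i _; have := H i; rewrite a b => ->.
  + by rewrite big1 // => i _; have := H i; rewrite a b => ->; rewrite mulr0.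
  + by rewrite big1 // => i _; have := H i; rewrite a b => <-; rewrite mulr0.
  + by [].
- move=> x hx; have hi : (index x L < size L)%N by rewrite index_mem.
  rewrite Flin_coef; apply: eq_trans (hA (Ordinal hi)).
  by apply: eq_bigr => i _; rewrite mxE /= nth_index.
- move=> g0 u0 h0 hu0 hd; rewrite Flin_coef big1 // => i _.
  by rewrite (hom_deg (hfs i) h0 hu0 hd) mulr0.
Qed.
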